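(* Let $m\ge1$ and $r,s\ge0$ with $r+s\ge1$. Then $H_m\oplus A(r\mid s)$ is capable if and only if $m=1$.
   Context: All algebras are over a field $\mathbb{F}$ of characteristic $\neq 2,3$. $A(r\mid s)$ is the abelian Lie superalgebra of dimension $(r\mid s)$. $H_m$ is the Lie superalgebra with even basis $x_1,\dots,x_m$, odd basis $y_1,\dots,y_m,z$, and nonzero brackets $[x_j,y_j]=z$ ($1\le j\le m$). A Lie superalgebra $L$ is capable if $L\cong H/Z(H)$ for some Lie superalgebra $H$. *)

(* Defs.v *)
From HB Require Import structures.
From mathcomp Require Import all_boot all_algebra.
Set Implicit Arguments. Unset Strict Implicit. Unset Printing Implicit Defensive.
Import GRing.Theory.
Local Open Scope ring_scope.

(* A Lie superalgebra L = L_0 (+) L_1 over F, given by its homogeneous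
   components and the three homogeneous pieces of the bracket:
     br00 : L_0 x L_0 -> L_0,  br01 : L_0 x L_1 -> L_1  ([x,u] for x even, u odd;
     [u,x] := -[x,u]),  br11 : L_1 x L_1 -> L_0.
   Axioms: bilinearity, graded skew-symmetry and the graded Jacobi identity
   (written out on homogeneous triples; the remaining orderings follow from
   graded skew-symmetry). *)
Record LieSuperalgebra (F : fieldType) := LieSuper {
  ev : lmodType F;
  od : lmodType F;
  br00 : ev -> ev -> ev;
  br01 : ev -> od -> od;
  br11 : od -> od -> ev;
  br00_linl : forall (a : F) x y z, br00 (a *: x + y) z = a *: br00 x z + br00 y z;
  br00_linr : forall (a : F) x y z, br00 x (a *: y + z) = a *: br00 x y + br00 x z;
  br01_linl : forall (a : F) x y u, br01 (a *: x + y) u = a *: br01 x u + br01 y u;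
  br01_linr : forall (a : F) x u v, br01 x (a *: u + v) = a *: br01 x u + br01 x v;
  br11_linl : forall (a : F) u v w, br11 (a *: u + v) w = a *: br11 u w + br11 v w;
  br11_linr : forall (a : F) u v w, br11 u (a *: v + w) = a *: br11 u v + br11 u w;
  br00_skew : forall x y, br00 x y = - br00 y x;
  br11_sym : forall u v, br11 u v = br11 v u;
  jacobi000 : forall x y z,
    br00 x (br00 y z) = br00 (br00 x y) z + br00 y (br00 x z);
  jacobi001 : forall x y u,
    br01 x (br01 y u) = br01 (br00 x y) u + br01 y (br01 x u);
  jacobi011 : forall x u v,
    br00 x (br11 u v) = br11 (br01 x u) v + br11 u (br01 x v);
  jacobi111 : forall u v w,
    br01 (br11 u v) w + br01 (br11 v w) u + br01 (br11 w u) v = 0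
}.

Arguments br00 {F} _ _ _.
Arguments br01 {F} _ _ _.
Arguments br11 {F} _ _ _.
Arguments ev {F} _.
Arguments od {F} _.

Definition lin (F : fieldType) (V W : lmodType F) (f : V -> W) : Prop :=
  forall (a : F) x y, f (a *: x + y) = a *: f x + f y.

Definition is_hom (F : fieldType) (H L : LieSuperalgebra F)
  (f0 : ev H -> ev L) (f1 : od H -> od L) : Prop :=
  [/\ lin f0, lin f1,
      forall x y, f0 (br00 H x y) = br00 L (f0 x) (f0 y),
      forall x u, f1 (br01 H x u) = br01 L (f0 x) (f1 u) &
      forall u v, f0 (br11 H u v) = br11 L (f1 u) (f1 v)].

(* The centre Z(H) = Z_0 (+) Z_1 (the centre of a superalgebra is graded). *)
Definition central_ev (F : fieldType) (H : LieSuperalgebra F) (x : ev H) : Prop :=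
  (forall y, br00 H x y = 0) /\ (forall u, br01 H x u = 0).
Definition central_od (F : fieldType) (H : LieSuperalgebra F) (u : od H) : Prop :=
  (forall x, br01 H x u = 0) /\ (forall v, br11 H u v = 0).

(* L is capable iff L ~ H / Z(H) for some Lie superalgebra H, i.e. (first
   isomorphism theorem) there is a surjective homomorphism H -> L whose
   kernel is exactly Z(H). *)
Definition capable (F : fieldType) (L : LieSuperalgebra F) : Prop :=
  exists (H : LieSuperalgebra F) (f0 : ev H -> ev L) (f1 : od H -> od L),
    [/\ is_hom f0 f1,
        (forall y, exists x, f0 x = y),
        (forall v, exists u, f1 u = v),
        (forall x, f0 x = 0 <-> central_ev x) &
        (forall u, f1 u = 0 <-> central_od u)].

Section DirectSum.
Variables (F : fieldType) (L1 L2 : LieSuperalgebra F).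

Definition dsE : lmodType F := (ev L1 * ev L2)%type.
Definition dsO : lmodType F := (od L1 * od L2)%type.
Definition ds00 (x y : dsE) : dsE := (br00 L1 x.1 y.1, br00 L2 x.2 y.2).
Definition ds01 (x : dsE) (u : dsO) : dsO := (br01 L1 x.1 u.1, br01 L2 x.2 u.2).
Definition ds11 (u v : dsO) : dsE := (br11 L1 u.1 v.1, br11 L2 u.2 v.2).

Lemma ds_l1 (a : F) x y z : ds00 (a *: x + y) z = a *: ds00 x z + ds00 y z.
Proof. by rewrite /ds00 /= !br00_linl. Qed.
Lemma ds_l2 (a : F) x y z : ds00 x (a *: y + z) = a *: ds00 x y + ds00 x z.
Proof. by rewrite /ds00 /= !br00_linr. Qed.
Lemma ds_l3 (a : F) x y u : ds01 (a *: x + y) u = a *: ds01 x u + ds01 y u.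
Proof. by rewrite /ds01 /= !br01_linl. Qed.
Lemma ds_l4 (a : F) x u v : ds01 x (a *: u + v) = a *: ds01 x u + ds01 x v.
Proof. by rewrite /ds01 /= !br01_linr. Qed.
Lemma ds_l5 (a : F) u v w : ds11 (a *: u + v) w = a *: ds11 u w + ds11 v w.
Proof. by rewrite /ds11 /= !br11_linl. Qed.
Lemma ds_l6 (a : F) u v w : ds11 u (a *: v + w) = a *: ds11 u v + ds11 u w.
Proof. by rewrite /ds11 /= !br11_linr. Qed.
Lemma ds_sk x y : ds00 x y = - ds00 y x.
Proof. by rewrite /ds00 /= br00_skew [br00 L2 _ _]br00_skew. Qed.
Lemma ds_sy u v : ds11 u v = ds11 v u.
Proof. by rewrite /ds11 /= br11_sym [br11 L2 _ _]br11_sym. Qed.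
Lemma ds_j0 x y z : ds00 x (ds00 y z) = ds00 (ds00 x y) z + ds00 y (ds00 x z).
Proof. by rewrite /ds00 /= (jacobi000 x.1) (jacobi000 x.2). Qed.
Lemma ds_j1 x y u : ds01 x (ds01 y u) = ds01 (ds00 x y) u + ds01 y (ds01 x u).
Proof. by rewrite /ds00 /ds01 /= (jacobi001 x.1) (jacobi001 x.2). Qed.
Lemma ds_j2 x u v : ds00 x (ds11 u v) = ds11 (ds01 x u) v + ds11 u (ds01 x v).
Proof. by rewrite /ds00 /ds01 /ds11 /= (jacobi011 x.1) (jacobi011 x.2). Qed.
Lemma ds_j3 u v w : ds01 (ds11 u v) w + ds01 (ds11 v w) u + ds01 (ds11 w u) v = 0.
Proof.
by rewrite /ds01 /ds11; apply: (f_equal2 pair); apply: jacobi111.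
Qed.

Definition dsum : LieSuperalgebra F :=
  @LieSuper F dsE dsO ds00 ds01 ds11 ds_l1 ds_l2 ds_l3 ds_l4 ds_l5 ds_l6
    ds_sk ds_sy ds_j0 ds_j1 ds_j2 ds_j3.
End DirectSum.

Section Abelian.
Variables (F : fieldType) (r s : nat).
Definition abE : lmodType F := 'rV[F]_r.
Definition abO : lmodType F := 'rV[F]_s.
Definition ab00 (x y : abE) : abE := 0.
Definition ab01 (x : abE) (u : abO) : abO := 0.
Definition ab11 (u v : abO) : abE := 0.
Lemma ab_l1 (a : F) x y z : ab00 (a *: x + y) z = a *: ab00 x z + ab00 y z.
Proof. by rewrite /ab00 scaler0 addr0. Qed.
Lemma ab_l2 (a : F) x y z : ab00 x (a *: y + z) = a *: ab00 x y + ab00 x z.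
Proof. by rewrite /ab00 scaler0 addr0. Qed.
Lemma ab_l3 (a : F) x y u : ab01 (a *: x + y) u = a *: ab01 x u + ab01 y u.
Proof. by rewrite /ab01 scaler0 addr0. Qed.
Lemma ab_l4 (a : F) x u v : ab01 x (a *: u + v) = a *: ab01 x u + ab01 x v.
Proof. by rewrite /ab01 scaler0 addr0. Qed.
Lemma ab_l5 (a : F) u v w : ab11 (a *: u + v) w = a *: ab11 u w + ab11 v w.
Proof. by rewrite /ab11 scaler0 addr0. Qed.
Lemma ab_l6 (a : F) u v w : ab11 u (a *: v + w) = a *: ab11 u v + ab11 u w.
Proof. by rewrite /ab11 scaler0 addr0. Qed.
Lemma ab_sk x y : ab00 x y = - ab00 y x.
Proof. by rewrite /ab00 oppr0. Qed.
Lemma ab_sy u v : ab11 u v = ab11 v u.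
Proof. by []. Qed.
Lemma ab_j0 x y z : ab00 x (ab00 y z) = ab00 (ab00 x y) z + ab00 y (ab00 x z).
Proof. by rewrite /ab00 addr0. Qed.
Lemma ab_j1 x y u : ab01 x (ab01 y u) = ab01 (ab00 x y) u + ab01 y (ab01 x u).
Proof. by rewrite /ab01 addr0. Qed.
Lemma ab_j2 x u v : ab00 x (ab11 u v) = ab11 (ab01 x u) v + ab11 u (ab01 x v).
Proof. by rewrite /ab00 /ab11 addr0. Qed.
Lemma ab_j3 u v w : ab01 (ab11 u v) w + ab01 (ab11 v w) u + ab01 (ab11 w u) v = 0.
Proof. by rewrite /ab01 !addr0. Qed.

Definition Abel : LieSuperalgebra F :=
  @LieSuper F abE abO ab00 ab01 ab11 ab_l1 ab_l2 ab_l3 ab_l4 ab_l5 ab_l6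
    ab_sk ab_sy ab_j0 ab_j1 ab_j2 ab_j3.
End Abelian.

(* ---------- H_m ----------
   even part: span of x_1..x_m            (coordinates in 'rV_m);
   odd part : span of y_1..y_m and z      (coordinates in 'rV_m * F, the
              F-component being the z-coordinate);
   the only nonzero brackets are [x_j, y_j] = z, i.e.
   [sum a_j x_j, sum b_j y_j + c z] = (sum_j a_j b_j) z. *)
Section Heisenberg.
Variables (F : fieldType) (m : nat).
Definition hpair (x y : 'rV[F]_m) : F := \sum_(j < m) x 0 j * y 0 j.

Lemma hpair_linl (a : F) x y z :
  hpair (a *: x + y) z = a * hpair x z + hpair y z.
Proof.
rewrite /hpair big_distrr -big_split /=; apply: eq_bigr => j _.
by rewrite !mxE mulrDl mulrA.
Qed.
Lemma hpair_linr (a : F) x y z :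
  hpair x (a *: y + z) = a * hpair x y + hpair x z.
Proof.
rewrite /hpair big_distrr -big_split /=; apply: eq_bigr => j _.
by rewrite !mxE mulrDr mulrCA.
Qed.
Lemma hpair0r x : hpair x 0 = 0.
Proof. by rewrite /hpair big1 // => j _; rewrite mxE mulr0. Qed.
Lemma hpair0l x : hpair 0 x = 0.
Proof. by rewrite /hpair big1 // => j _; rewrite mxE mul0r. Qed.

Definition hE : lmodType F := 'rV[F]_m.
Definition hO : lmodType F := ('rV[F]_m * F^o)%type.
Definition h00 (x y : hE) : hE := 0.
Definition h01 (x : hE) (u : hO) : hO := (0, hpair x u.1).
Definition h11 (u v : hO) : hE := 0.

Lemma h_l1 (a : F) x y z : h00 (a *: x + y) z = a *: h00 x z + h00 y z.
Proof. by rewrite /h00 scaler0 addr0. Qed.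
Lemma h_l2 (a : F) x y z : h00 x (a *: y + z) = a *: h00 x y + h00 x z.
Proof. by rewrite /h00 scaler0 addr0. Qed.
Lemma h_l3 (a : F) x y u : h01 (a *: x + y) u = a *: h01 x u + h01 y u.
Proof. by rewrite /h01 hpair_linl; congr pair; rewrite /= scaler0 addr0. Qed.
Lemma h_l4 (a : F) x u v : h01 x (a *: u + v) = a *: h01 x u + h01 x v.
Proof. by rewrite /h01 /= hpair_linr; congr pair; rewrite /= scaler0 addr0. Qed.
Lemma h_l5 (a : F) u v w : h11 (a *: u + v) w = a *: h11 u w + h11 v w.
Proof. by rewrite /h11 scaler0 addr0. Qed.
Lemma h_l6 (a : F) u v w : h11 u (a *: v + w) = a *: h11 u v + h11 u w.
Proof. by rewrite /h11 scaler0 addr0. Qed.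
Lemma h_sk x y : h00 x y = - h00 y x.
Proof. by rewrite /h00 oppr0. Qed.
Lemma h_sy u v : h11 u v = h11 v u.
Proof. by []. Qed.
Lemma h_j0 x y z : h00 x (h00 y z) = h00 (h00 x y) z + h00 y (h00 x z).
Proof. by rewrite /h00 addr0. Qed.
Lemma h_j1 x y u : h01 x (h01 y u) = h01 (h00 x y) u + h01 y (h01 x u).
Proof.
rewrite /h01 /h00 /= !hpair0r !hpair0l.
have -> : ((0, 0) : hO) = 0 by [].
by rewrite addr0.
Qed.
Lemma h_j2 x u v : h00 x (h11 u v) = h11 (h01 x u) v + h11 u (h01 x v).
Proof. by rewrite /h00 /h11 addr0. Qed.
Lemma h_j3 u v w : h01 (h11 u v) w + h01 (h11 v w) u + h01 (h11 w u) v = 0.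
Proof.
rewrite /h01 /h11 !hpair0l.
have -> : ((0, 0) : hO) = 0 by [].
by rewrite !addr0.
Qed.

Definition Heis : LieSuperalgebra F :=
  @LieSuper F hE hO h00 h01 h11 h_l1 h_l2 h_l3 h_l4 h_l5 h_l6
    h_sk h_sy h_j0 h_j1 h_j2 h_j3.
End Heisenberg.

(* Main.v *)
Require Import Defs.
From HB Require Import structures.
From mathcomp Require Import all_boot all_algebra.
From mathcomp Require Import ring.
Import GRing.Theory.
Set Implicit Arguments. Unset Strict Implicit. Unset Printing Implicit Defensive.
Local Open Scope ring_scope.

Section Lin.
Variables (F : fieldType) (V W : lmodType F) (f : V -> W) (hf : lin f).
Lemma lin0 : f 0 = 0.
Proof.
have h := hf 1 0 0; rewrite !scale1r addr0 in h.
symmetry; apply: (addrI (f 0)); by rewrite addr0 -h.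
Qed.
Lemma linD x y : f (x + y) = f x + f y.
Proof. by rewrite -{1}(scale1r x) hf scale1r. Qed.
Lemma linZ a x : f (a *: x) = a *: f x.
Proof. by rewrite -(addr0 (a*:x)) hf lin0 addr0. Qed.
Lemma linN x : f (- x) = - f x.
Proof. by rewrite -scaleN1r linZ scaleN1r. Qed.
Lemma linB x y : f (x - y) = f x - f y.
Proof. by rewrite linD linN. Qed.
End Lin.

Section Br.
Variables (F : fieldType) (L : LieSuperalgebra F).
Lemma l01r x : lin (br01 L x). Proof. move=> a u v; exact: br01_linr. Qed.
Lemma l01l u : lin (fun x => br01 L x u). Proof. move=> a x y; exact: br01_linl. Qed.
Lemma l11r u : lin (br11 L u). Proof. move=> a x y; exact: br11_linr. Qed.
Lemma l11l v : lin (fun u => br11 L u v). Proof. move=> a x y; exact: br11_linl. Qed.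
Lemma br01Br x u v : br01 L x (u - v) = br01 L x u - br01 L x v.
Proof. exact: (linB (l01r x)). Qed.
Lemma br01Dr x u v : br01 L x (u + v) = br01 L x u + br01 L x v.
Proof. exact: (linD (l01r x)). Qed.
Lemma br01Zr x a u : br01 L x (a *: u) = a *: br01 L x u.
Proof. exact: (linZ (l01r x)). Qed.
Lemma br11Bl u v w : br11 L (u - v) w = br11 L u w - br11 L v w.
Proof. exact: (linB (l11l w)). Qed.
Lemma br11Dr u v w : br11 L u (v + w) = br11 L u v + br11 L u w.
Proof. exact: (linD (l11r u)). Qed.
Lemma br11Zr u a v : br11 L u (a *: v) = a *: br11 L u v.
Proof. exact: (linZ (l11r u)). Qed.
End Br.

Definition dl (F : fieldType) m (k : 'I_m) : 'rV[F]_m := \row_j (j == k)%:R.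

Lemma hpair_dl (F : fieldType) m (a : 'rV[F]_m) k : hpair a (dl F k) = a 0 k.
Proof.
rewrite /hpair (bigD1 k) //= big1 ?addr0 => [|j /negbTE njk];
  by rewrite !mxE ?eqxx ?njk ?mulr1 ?mulr0.
Qed.
Lemma hpair_dl' (F : fieldType) m (a : 'rV[F]_m) k : hpair (dl F k) a = a 0 k.
Proof.
rewrite /hpair (bigD1 k) //= big1 ?addr0 => [|j /negbTE njk];
  by rewrite !mxE ?eqxx ?njk ?mul1r ?mul0r.
Qed.
Lemma dl_ne (F : fieldType) m (i j : 'I_m) : i != j -> (dl F i) 0 j = 0.
Proof. by move=> /negbTE h; rewrite mxE eq_sym h. Qed.

Lemma not_cap (F : fieldType) m r s (hm : (2 <= m)%N) :
  ~ capable (dsum (Heis F m) (Abel F r s)).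
Proof.
set L := dsum (Heis F m) (Abel F r s).
move=> [H [f0 [f1 [[lf0 lf1 hf00 hf01 hf11] sf0 sf1 k0 k1]]]].
have c0 a : f0 a = 0 -> central_ev a by move/(k0 a).
have c1 u : f1 u = 0 -> central_od u by move/(k1 u).
pose i1 : 'I_m := Ordinal (leq_trans (isT : (1 <= 2)%N) hm).
pose i2 : 'I_m := Ordinal hm.
have n12 : i1 != i2 by [].
pose xL k : ev L := (dl F k, 0).
pose yL k : od L := ((dl F k, 0), 0).
pose zL : od L := ((0, 1), 0).
have brLy (h : ev L) k : br01 L h (yL k) = ((h.1 : 'rV[F]_m) 0 k) *: zL.
  rewrite /= /ds01 /= /h01 /= hpair_dl /zL.
  congr pair; rewrite ?scaler0 //. congr pair; rewrite ?scaler0 //=.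
  by rewrite /GRing.scale /= mulr1.
have brLx k (v : od L) : br01 L (xL k) v = ((v.1.1 : 'rV[F]_m) 0 k) *: zL.
  rewrite /= /ds01 /= /h01 /= hpair_dl' /zL.
  congr pair; rewrite ?scaler0 //. congr pair; rewrite ?scaler0 //=.
  by rewrite /GRing.scale /= mulr1.
have br00L (a b : ev L) : br00 L a b = 0 by [].
have br11L (a b : od L) : br11 L a b = 0 by [].
have [X1 eX1] := sf0 (xL i1).
have [X2 eX2] := sf0 (xL i2).
have [Y1 eY1] := sf1 (yL i1).
have [Y2 eY2] := sf1 (yL i2).
have [Z eZ] := sf1 zL.
have C k (X : ev H) (Y : od H) : f0 X = xL k -> f1 Y = yL k ->
    central_od (br01 H X Y - Z).
  move=> eX eY; apply: c1; rewrite (linB lf1) hf01 eX eY brLy eZ /=.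
  by rewrite mxE eqxx scale1r subrr.
have X0 (a b : ev H) : central_ev (br00 H a b).
  by apply: c0; rewrite hf00 br00L.
have Y0 (a b : od H) : central_ev (br11 H a b).
  by apply: c0; rewrite hf11 br11L.
have XY12 : central_od (br01 H X1 Y2).
  apply: c1; rewrite hf01 eX1 eY2 brLy /= dl_ne // scale0r //.
have XY21 : central_od (br01 H X2 Y1).
  apply: c1; rewrite hf01 eX2 eY1 brLy /= dl_ne 1?eq_sym // scale0r //.
have eZ1 : Z = br01 H X1 Y1 - (br01 H X1 Y1 - Z) by rewrite opprB addrC subrK.
have eZ2 : Z = br01 H X2 Y2 - (br01 H X2 Y2 - Z) by rewrite opprB addrC subrK.
have XZ : br01 H X1 Z = 0.
  rewrite eZ2 br01Br (proj1 (C _ _ _ eX2 eY2)) subr0 jacobi001.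
  by rewrite (proj2 (X0 _ _)) (proj1 XY12) addr0.
have ZY : br11 H Z Y1 = 0.
  rewrite eZ2 br11Bl (proj2 (C _ _ _ eX2 eY2)) subr0.
  have := jacobi011 X2 Y2 Y1.
  rewrite br00_skew (proj1 (Y0 _ _)) oppr0 [br11 H Y2 _]br11_sym (proj2 XY21) addr0 => <-.
  done.
have cZ : central_od Z.
  split.
  - move=> h.
    rewrite eZ1 br01Br (proj1 (C _ _ _ eX1 eY1)) subr0 jacobi001.
    rewrite (proj2 (X0 _ _)) add0r.
    pose a := ((f0 h).1 : 'rV[F]_m) 0 i1.
    have cD : central_od (br01 H h Y1 - a *: Z).
      apply: c1; rewrite (linB lf1) hf01 eY1 brLy (linZ lf1) eZ subrr //.
    have -> : br01 H h Y1 = (br01 H h Y1 - a *: Z) + a *: Z by rewrite subrK.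
    by rewrite br01Dr (proj1 cD) br01Zr XZ scaler0 addr0.
  - move=> v.
    rewrite eZ1 br11Bl (proj2 (C _ _ _ eX1 eY1)) subr0.
    have := jacobi011 X1 Y1 v.
    rewrite br00_skew (proj1 (Y0 _ _)) oppr0 => /eqP; rewrite eq_sym addr_eq0.
    move=> /eqP ->.
    pose b := ((f1 v).1.1 : 'rV[F]_m) 0 i1.
    have cD : central_od (br01 H X1 v - b *: Z).
      apply: c1; rewrite (linB lf1) hf01 eX1 brLx (linZ lf1) eZ subrr //.
    have -> : br01 H X1 v = (br01 H X1 v - b *: Z) + b *: Z by rewrite subrK.
    rewrite br11Dr br11Zr br11_sym (proj2 cD) [br11 H Y1 Z]br11_sym ZY.
    by rewrite scaler0 addr0 oppr0.
have := proj2 (k1 Z) cZ; rewrite eZ => /(f_equal (fun u : od L => u.1.2)) /=.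
by move/eqP; rewrite oner_eq0.
Qed.

Section Ext.
Variables (F : fieldType) (L : LieSuperalgebra F) (M0 M1 : lmodType F)
 (p00 : ev L -> ev L -> M0) (p01 : ev L -> od L -> M1) (p11 : od L -> od L -> M0).
Hypotheses
 (p_l1 : forall (a : F) x y z, p00 (a *: x + y) z = a *: p00 x z + p00 y z)
 (p_l2 : forall (a : F) x y z, p00 x (a *: y + z) = a *: p00 x y + p00 x z)
 (p_l3 : forall (a : F) x y u, p01 (a *: x + y) u = a *: p01 x u + p01 y u)
 (p_l4 : forall (a : F) x u v, p01 x (a *: u + v) = a *: p01 x u + p01 x v)
 (p_l5 : forall (a : F) u v w, p11 (a *: u + v) w = a *: p11 u w + p11 v w)
 (p_l6 : forall (a : F) u v w, p11 u (a *: v + w) = a *: p11 u v + p11 u w)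
 (p_sk : forall x y, p00 x y = - p00 y x)
 (p_sy : forall u v, p11 u v = p11 v u)
 (p_j0 : forall x y z,
    p00 x (br00 L y z) = p00 (br00 L x y) z + p00 y (br00 L x z))
 (p_j1 : forall x y u,
    p01 x (br01 L y u) = p01 (br00 L x y) u + p01 y (br01 L x u))
 (p_j2 : forall x u v,
    p00 x (br11 L u v) = p11 (br01 L x u) v + p11 u (br01 L x v))
 (p_j3 : forall u v w,
    p01 (br11 L u v) w + p01 (br11 L v w) u + p01 (br11 L w u) v = 0).

Definition xE : lmodType F := (ev L * M0)%type.
Definition xO : lmodType F := (od L * M1)%type.
Definition x00 (x y : xE) : xE := (br00 L x.1 y.1, p00 x.1 y.1).
Definition x01 (x : xE) (u : xO) : xO := (br01 L x.1 u.1, p01 x.1 u.1).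
Definition x11 (u v : xO) : xE := (br11 L u.1 v.1, p11 u.1 v.1).

Lemma x_l1 (a : F) x y z : x00 (a *: x + y) z = a *: x00 x z + x00 y z.
Proof. by rewrite /x00 /= br00_linl p_l1. Qed.
Lemma x_l2 (a : F) x y z : x00 x (a *: y + z) = a *: x00 x y + x00 x z.
Proof. by rewrite /x00 /= br00_linr p_l2. Qed.
Lemma x_l3 (a : F) x y u : x01 (a *: x + y) u = a *: x01 x u + x01 y u.
Proof. by rewrite /x01 /= br01_linl p_l3. Qed.
Lemma x_l4 (a : F) x u v : x01 x (a *: u + v) = a *: x01 x u + x01 x v.
Proof. by rewrite /x01 /= br01_linr p_l4. Qed.
Lemma x_l5 (a : F) u v w : x11 (a *: u + v) w = a *: x11 u w + x11 v w.
Proof. by rewrite /x11 /= br11_linl p_l5. Qed.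
Lemma x_l6 (a : F) u v w : x11 u (a *: v + w) = a *: x11 u v + x11 u w.
Proof. by rewrite /x11 /= br11_linr p_l6. Qed.
Lemma x_sk x y : x00 x y = - x00 y x.
Proof. by rewrite /x00 /= br00_skew p_sk. Qed.
Lemma x_sy u v : x11 u v = x11 v u.
Proof. by rewrite /x11 /= br11_sym p_sy. Qed.
Lemma x_j0 x y z : x00 x (x00 y z) = x00 (x00 x y) z + x00 y (x00 x z).
Proof. by rewrite /x00 /= (jacobi000 x.1) (p_j0 x.1). Qed.
Lemma x_j1 x y u : x01 x (x01 y u) = x01 (x00 x y) u + x01 y (x01 x u).
Proof. by rewrite /x00 /x01 /= (jacobi001 x.1) (p_j1 x.1). Qed.
Lemma x_j2 x u v : x00 x (x11 u v) = x11 (x01 x u) v + x11 u (x01 x v).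
Proof. by rewrite /x00 /x01 /x11 /= (jacobi011 x.1) (p_j2 x.1). Qed.
Lemma x_j3 u v w : x01 (x11 u v) w + x01 (x11 v w) u + x01 (x11 w u) v = 0.
Proof.
by rewrite /x01 /x11; apply: (f_equal2 pair); [apply: jacobi111 | apply: p_j3].
Qed.

Definition Ext : LieSuperalgebra F :=
  @LieSuper F xE xO x00 x01 x11 x_l1 x_l2 x_l3 x_l4 x_l5 x_l6
    x_sk x_sy x_j0 x_j1 x_j2 x_j3.
End Ext.

Section Cap.
Variables (F : fieldType) (r s : nat).
Let L := dsum (Heis F 1) (Abel F r s).
Definition al (x : ev L) : F := (x.1 : 'rV[F]_1) 0 0.
Definition q00 (x y : ev L) : 'rV[F]_r :=
  al x *: (y.2 : 'rV[F]_r) - al y *: (x.2 : 'rV[F]_r).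
Definition q01 (x : ev L) (u : od L) : (F^o * 'rV[F]_s)%type :=
  (al x * (u.1.2 : F) : F^o, al x *: (u.2 : 'rV[F]_s)).
Definition q11 (u v : od L) : 'rV[F]_r := 0.

Lemma alL a x y : al (a *: x + y) = a * al x + al y.
Proof. by rewrite /al /= !mxE. Qed.
Lemma al0 : al 0 = 0. Proof. by rewrite /al /= mxE. Qed.

Lemma q_l1 (a : F) x y z : q00 (a *: x + y) z = a *: q00 x z + q00 y z.
Proof. rewrite /q00 alL; apply/rowP => i; rewrite !mxE /=; ring. Qed.
Lemma q_l2 (a : F) x y z : q00 x (a *: y + z) = a *: q00 x y + q00 x z.
Proof. rewrite /q00 alL; apply/rowP => i; rewrite !mxE /=; ring. Qed.
Lemma q_l3 (a : F) x y u : q01 (a *: x + y) u = a *: q01 x u + q01 y u.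
Proof.
rewrite /q01 alL; apply: (f_equal2 pair).
  rewrite /= /GRing.scale /=; ring.
apply/rowP => i; rewrite !mxE /=; ring.
Qed.
Lemma q_l4 (a : F) x u v : q01 x (a *: u + v) = a *: q01 x u + q01 x v.
Proof.
rewrite /q01; apply: (f_equal2 pair).
  rewrite /= /GRing.scale /=; ring.
apply/rowP => i; rewrite !mxE /=; ring.
Qed.
Lemma q_l5 (a : F) u v w : q11 (a *: u + v) w = a *: q11 u w + q11 v w.
Proof. by rewrite /q11 scaler0 addr0. Qed.
Lemma q_l6 (a : F) u v w : q11 u (a *: v + w) = a *: q11 u v + q11 u w.
Proof. by rewrite /q11 scaler0 addr0. Qed.
Lemma q_sk x y : q00 x y = - q00 y x.
Proof. by rewrite /q00 opprB. Qed.
Lemma q_sy u v : q11 u v = q11 v u.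
Proof. by []. Qed.
Lemma brL00 x y : br00 L x y = 0. Proof. by []. Qed.
Lemma brL11 x y : br11 L x y = 0. Proof. by []. Qed.
Lemma q00_0 x : q00 x 0 = 0.
Proof. by rewrite /q00 al0 scale0r scaler0 subr0. Qed.
Lemma q00_0l x : q00 0 x = 0.
Proof. by rewrite q_sk q00_0 oppr0. Qed.
Lemma q01_0l u : q01 0 u = 0.
Proof. by rewrite /q01 al0 mul0r scale0r. Qed.
Lemma q_j0 x y z : q00 x (br00 L y z) = q00 (br00 L x y) z + q00 y (br00 L x z).
Proof. by rewrite !brL00 !q00_0 q00_0l add0r. Qed.
Lemma q_j1 x y u : q01 x (br01 L y u) = q01 (br00 L x y) u + q01 y (br01 L x u).
Proof.
rewrite brL00 q01_0l add0r /q01 /= /h01 /= /al; apply: (f_equal2 pair).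
  rewrite /hpair !big_ord1.
  have -> : (0 : 'I_1) = ord0 by apply: val_inj.
  ring.
by rewrite !scaler0.
Qed.
Lemma q_j2 x u v : q00 x (br11 L u v) = q11 (br01 L x u) v + q11 u (br01 L x v).
Proof. by rewrite brL11 q00_0 /q11 addr0. Qed.
Lemma q_j3 u v w : q01 (br11 L u v) w + q01 (br11 L v w) u + q01 (br11 L w u) v = 0.
Proof. by rewrite !brL11 !q01_0l !addr0. Qed.

Definition HH := Ext q_l1 q_l2 q_l3 q_l4 q_l5 q_l6 q_sk q_sy q_j0 q_j1 q_j2 q_j3.

Lemma hp1 (a b : 'rV[F]_1) : hpair a b = a 0 0 * b 0 0.
Proof. by rewrite /hpair big_ord1; have -> : (0 : 'I_1) = ord0 by apply: val_inj. Qed.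
Lemma row1_0 (a : 'rV[F]_1) : a 0 0 = 0 -> a = 0.
Proof.
move=> h; apply/rowP => i; rewrite mxE -h; congr (a _ _); apply: val_inj; by rewrite /= (ord1 i).
Qed.
Definition one1 : 'rV[F]_1 := \row_j 1.
Lemma one1E : one1 0 0 = 1. Proof. by rewrite mxE. Qed.

Lemma cap1 : capable L.
Proof.
exists HH, (fun x => x.1), (fun u => u.1); split.
- split => //.
- by move=> y; exists (y, 0).
- by move=> y; exists (y, 0).
- case=> [[a b] c] /=; split.
  + case=> -> ->; split => [[[y1 y2] y3]|[[[u1 u2] u3] u4]] /=.
      by rewrite /x00 /= q00_0l.
    rewrite /x01 /= q01_0l /= /ds01 /= /h01 /= hpair0l.
    by apply: (f_equal2 pair) => //; apply: (f_equal2 pair).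
  + case=> h1 h2.
    have ha : a 0 0 = 0.
      have := h2 (((one1, 0), 0), 0).
      rewrite /= /x01 /= /ds01 /= /h01 /= hp1 one1E mulr1.
      by move/(f_equal (fun p : od HH => p.1.1.2)).
    have hb : b = 0.
      have := h1 ((one1, 0), 0).
      rewrite /= /x00 /= /q00 /al /= ha one1E scale0r scale1r sub0r.
      by move/(f_equal (fun p : ev HH => p.2)) => /= /eqP; rewrite oppr_eq0 => /eqP.
    by rewrite hb (row1_0 ha).
- case=> [[[a1 a2] b] c] /=; split.
  + case=> -> -> ->; split => [[[y1 y2] y3]|[[[u1 u2] u3] u4]] /=.
      rewrite /x01 /= /ds01 /= /h01 /= /q01 /= hpair0r mulr0 scaler0.
      by apply: (f_equal2 pair) => //; apply: (f_equal2 pair).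
    by [].
  + case=> h1 h2.
    have := h1 ((one1, 0), 0).
    rewrite /= /x01 /= /ds01 /= /h01 /= /q01 /al /= hp1 one1E !mul1r scale1r => h.
    have e1 := f_equal (fun p : od HH => p.1.1.2) h.
    have e2 := f_equal (fun p : od HH => p.2.1) h.
    have e3 := f_equal (fun p : od HH => p.2.2) h.
    simpl in e1, e2, e3.
    by rewrite (row1_0 e1) e2 e3.
Qed.
End Cap.

Theorem mainTheorem6 (F : fieldType)
  (hchar2 : (2 \notin [pchar F])%N) (hchar3 : (3 \notin [pchar F])%N)
  (m r s : nat) (hm : (1 <= m)%N) (hrs : (1 <= r + s)%N) :
  capable (dsum (Heis F m) (Abel F r s)) <-> m = 1%N.
Proof.
split.
- case: m hm => [|[|m']] // _ hc; exfalso.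
  exact: (not_cap (isT : (2 <= m'.+2)%N) hc).
- move=> ->; exact: cap1.
Qed.
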